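(* Let $X$ be a separable absolutely strongly star-Menger space. If $Y$ is a closed and discrete subset of $X$, then $|Y|<\mathfrak{d}$.
   Context: All spaces are regular. $St(A,\mathcal{U})=\bigcup\{U\in\mathcal{U}:U\cap A\neq\emptyset\}$. $\mathfrak{d}$ is the dominating number. $X$ is absolutely strongly star-Menger if for each sequence $(\mathcal{U}_n:n\in\omega)$ of open covers and each dense subset $D$ of $X$ there are finite sets $F_n\subseteq D$ ($n\in\omega$) such that $\{St(F_n,\mathcal{U}_n):n\in\omega\}$ covers $X$. *)

(* Defs.v *)
From HB Require Import structures.
From mathcomp Require Import all_boot all_order.
From mathcomp Require Import all_classical all_reals all_analysis.
Set Implicit Arguments. Unset Strict Implicit. Unset Printing Implicit Defensive.
Local Open Scope classical_set_scope.
Local Open Scope card_scope.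

Definition star (T : Type) (A : set T) (U : set (set T)) : set T :=
  \bigcup_(V in [set V | U V /\ V `&` A !=set0]) V.

Definition open_cover (T : topologicalType) (U : set (set T)) : Prop :=
  (forall V, U V -> open V) /\ \bigcup_(V in U) V = setT.

Definition separable (T : topologicalType) : Prop :=
  exists D : set T, countable D /\ dense D.

Definition abs_strongly_star_Menger (T : topologicalType) : Prop :=
  forall (U : nat -> set (set T)) (D : set T),
    (forall n, open_cover (U n)) -> dense D ->
    exists F : nat -> set T,
      (forall n, finite_set (F n) /\ F n `<=` D) /\
      \bigcup_n star (F n) (U n) = setT.

Definition discrete_subset (T : topologicalType) (Y : set T) : Prop :=
  forall y, Y y -> exists V : set T, open V /\ V y /\ V `&` Y = [set y].

Definition eventually_le (g f : nat -> nat) : Prop :=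
  exists N, forall n, (N <= n)%N -> (g n <= f n)%N.

Definition dominating (F : set (nat -> nat)) : Prop :=
  forall g, exists2 f, F f & eventually_le g f.

(* |Y| < d, where d = min{|F| : F dominating}: |Y| < |F| for every dominating F *)
Definition card_lt_dominating (T : Type) (Y : set T) : Prop :=
  forall F : set (nat -> nat), dominating F -> Y #<= F /\ ~ (F #<= Y).

(* Main.v *)
Require Import Defs.
From HB Require Import structures.
From mathcomp Require Import all_boot all_order.
From mathcomp Require Import all_classical all_reals all_analysis.
From mathcomp Require Import zify.
From Stdlib Require Import Lia.
Local Open Scope classical_set_scope.
Local Open Scope card_scope.

Lemma card_le_fun T U (A : set T) (B : set U) (a0 : T) : A a0 -> A #<= B ->
  exists phi : T -> U, (forall x, A x -> B (phi x)) /\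
    (forall x x', A x -> A x' -> phi x = phi x' -> x = x').
Proof.
move=> Aa0 /card_leP [h].
have hI : forall a b : set_type A, h a = h b -> a = b.
  by move=> a b e; apply: (@inj _ _ _ h) => //; rewrite in_setT.
pose u0 := val (h (SigSub (mem_set Aa0))).
exists (fun x => match pselect (A x) with left Ax => val (h (SigSub (mem_set Ax))) | right _ => u0 end).
split.
  move=> x Ax; case: pselect => // Ax'.
  exact: set_mem (valP (h (SigSub (mem_set Ax')))).
move=> x x' Ax Ax'; case: pselect => // p; case: pselect => // p' e.
have := hI _ _ (val_inj e).
by move=> /(congr1 val).
Qed.

Fixpoint Ssum (h : nat -> nat) (n : nat) : nat :=
  match n with 0 => 0 | k.+1 => Ssum h k + h k end.

Lemma Ssum_ge h n j : (j < n)%N -> (h j <= Ssum h n)%N.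
Proof.
elim: n => // n IH; rewrite ltnS leq_eqVlt => /orP[/eqP ->|/IH]/=.
  exact: leq_addl.
by move=> H; apply: leq_trans H (leq_addr _ _).
Qed.

Lemma bound_nat (B : set nat) : finite_set B -> exists m, forall i, B i -> (i < m)%N.
Proof.
move=> fB; exists (foldr maxn 0 (finmap.enum_fset (fset_set B))).+1 => i Bi.
have : i \in (finmap.enum_fset (fset_set B)) by rewrite in_fset_set // mem_set.
elim: (finmap.enum_fset (fset_set B)) => //= a s IH; rewrite inE => /orP[/eqP ->|/IH].
  by rewrite ltnS leq_maxl.
by rewrite !ltnS => H; apply: leq_trans H (leq_maxr _ _).
Qed.
Lemma no_inj (X : topologicalType) (Y : set X) (F : set (nat -> nat))
  (phi : (nat -> nat) -> X) :
  accessible_space X -> separable X -> abs_strongly_star_Menger X ->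
  closed Y -> discrete_subset Y -> dominating F ->
  (forall f, F f -> Y (phi f)) ->
  (forall f f', F f -> F f' -> phi f = phi f' -> f = f') -> False.
Proof.
move=> acc [D [cD dD]] assm clY disc dF phiY phiI.
have [f0 Ff0 _] := dF (fun _ => 0%N).
pose x0 := phi f0.
have /pcard_injP [iota iotaI] := cD.
have /choice [e eP] : forall i : nat, exists x : X, (exists x', D x' /\ iota x' = i) -> D x /\ iota x = i.
  move=> i; case: (pselect (exists x', D x' /\ iota x' = i)) => [[x' h]|nh].
    by exists x' => _.
  by exists x0 => h; case: nh.
have eiota : forall x, D x -> e (iota x) = x.
  move=> x Dx; have [De ie] := eP (iota x) (ex_intro _ x (conj Dx erefl)).
  by apply: iotaI => //; rewrite inE.
have /choice [V VP] : forall y : X, exists V : set X, Y y -> open V /\ V y /\ V `&` Y = [set y].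
  move=> y; case: (pselect (Y y)) => [Yy|nY]; last by exists setT.
  by have [W HW] := disc y Yy; exists W.
have /choice [psi psiP] : forall y : X, exists h : nat -> nat, (exists f, F f /\ phi f = y) -> F h /\ phi h = y.
  move=> y; case: (pselect (exists f, F f /\ phi f = y)) => [[f h]|nh].
    by exists f => _.
  by exists f0 => h; case: nh.
have psi_phi : forall f, F f -> psi (phi f) = f.
  move=> f Ff; have [Fp pp] := psiP (phi f) (ex_intro _ f (conj Ff erefl)).
  exact: phiI.
pose av (y : X) (m : nat) := [set x | forall i, (i < m)%N -> e i = y \/ x <> e i].
have av_open : forall y m, open (av y m).
  move=> y m.
  have -> : av y m = ~` [set e i | i in [set i | (i < m)%N /\ e i <> y]].
    apply/seteqP; split => x /=.
      move=> h [i [im eiy] exi]; case: (h i im) => // /(_ (esym exi)) //.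
    move=> h i im; case: (pselect (e i = y)) => [->|ne]; [by left|right] => xe.
    by apply: h; exists i.
  rewrite openC; apply: (accessible_finite_set_closed.1 acc).
  apply: finite_image; apply: sub_finite_set (finite_II m) => i [] /=.
  by [].
pose U k := [set ~` Y] `|` [set W | exists2 y, Y y & W = V y `&` av y (psi y k).+1].
have cover : forall k, open_cover (U k).
  move=> k; split.
    move=> W [->|[y Yy ->]]; first exact: closed_openC.
    have [oV _] := VP y Yy; apply: openI => //; exact: av_open.
  apply/seteqP; split => // x _; case: (pselect (Y x)) => Yx.
    exists (V x `&` av x (psi x k).+1); first by right; exists x.
    split; first by have [_ []] := VP x Yx.
    move=> i _; case: (pselect (e i = x)) => [->|ne]; [by left|right].
    by move=> h; apply: ne.
  by exists (~` Y); [left|].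
have Fsex : forall j, exists Fj : nat -> set X,
    (forall n, finite_set (Fj n) /\ Fj n `<=` D) /\
    \bigcup_n star (Fj n) (U (n + j)%N) = setT.
  by move=> j; apply: assm => // n; apply: cover.
have /choice [Fs FsP] := Fsex.
have gex : forall j, exists gj : nat -> nat, forall n x, Fs j n x -> (iota x < gj n)%N.
  move=> j; suff /choice [gj ?] : forall n, exists m, forall x, Fs j n x -> (iota x < m)%N.
    by exists gj.
  move=> n; have [fin _] := (FsP j).1 n.
  have [m Hm] := @bound_nat _ (finite_image iota fin).
  by exists m => x Fx; apply: Hm; exists x.
have /choice [g gP] := gex.
pose G m := (Ssum (fun j => g j (m - j)) m.+1 + Ssum (fun i => psi (e i) m) m.+1 + 1)%N.
have [f Ff [N HN]] := dF G.
pose y := phi f.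
have Yy : Y y by exact: phiY.
have psiy : psi y = f by exact: psi_phi.
have ney : forall i, e i <> y.
  move=> i eiy; have := HN (N + i)%N (leq_addr _ _).
  have : (psi (e i) (N + i) <= Ssum (fun i0 => psi (e i0) (N + i)) (N + i).+1)%N.
    by apply: (Ssum_ge (fun i0 => psi (e i0) (N + i))); rewrite ltnS leq_addl.
  rewrite eiy psiy /G; lia.
have : (\bigcup_n star (Fs N n) (U (n + N)%N)) y by rewrite (FsP N).2.
case=> n _ [W [UW [z [Wz Fz]]] Wy].
case: UW => [WE|[y' Yy' WE]]; first by move: Wy; rewrite WE.
rewrite WE in Wy Wz.
have yy' : y = y'.
  have [_ [_ VY]] := VP y' Yy'.
  have : (V y' `&` Y) y by split => //; case: Wy.
  by rewrite VY.
rewrite -yy' psiy in Wz.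
have [_ FD] := (FsP N).1 n.
have Dz := FD z Fz.
have iz := gP N n z Fz.
have : (g N n <= G (n + N))%N.
  have := @Ssum_ge (fun j => g j (n + N - j)) (n + N).+1 N.
  rewrite addnK /G => h; have := h (leq_addl n N : (N < (n + N).+1)%N); lia.
have := HN (n + N)%N (leq_addl _ _) => h1 h2.
case: Wz => _ /(_ (iota z)) H.
have Hlt : (iota z < (f (n + N)).+1)%N.
  by rewrite ltnS; apply: leq_trans (ltnW iz) _; apply: leq_trans h2 h1.
case: (H Hlt); rewrite eiota //; first by move=> zy; apply: (ney (iota z)); rewrite eiota.
Qed.
Local Close Scope card_scope.
Theorem mainTheorem9 (X : topologicalType) (Y : set X) :
  regular_space X -> accessible_space X ->
  separable X -> abs_strongly_star_Menger X ->
  closed Y -> discrete_subset Y ->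
  card_lt_dominating Y.
Proof.
move=> _ acc sep assm clY disc F dF.
have noinj := fun phi => @no_inj X Y F phi acc sep assm clY disc dF.
have [f0 Ff0 _] := dF (fun _ => 0%N).
have notFY : ~ (F #<= Y)%card.
  move=> /(@card_le_fun _ _ _ _ _ Ff0) [phi [phiY phiI]]; exact: (noinj phi).
pose Pset := [set M : set (X * (nat -> nat)) |
  (forall p, M p -> Y p.1 /\ F p.2) /\
  (forall a b b', M (a, b) -> M (a, b') -> b = b') /\
  (forall a a' b, M (a, b) -> M (a', b) -> a = a')].
have [M [PM Mmax]] : exists M, Pset M /\ forall B, M `<` B -> ~ Pset B.
  apply: Zorn_bigcup => C CP tot; split; [|split].
  - by move=> p [R CR Rp]; exact: (CP R CR).1 p Rp.
  - move=> a b b' [R1 C1 h1] [R2 C2 h2]; case: (tot R1 R2 C1 C2) => sub.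
      exact: (CP R2 C2).2.1 a b b' (sub _ h1) h2.
    exact: (CP R1 C1).2.1 a b b' h1 (sub _ h2).
  - move=> a a' b [R1 C1 h1] [R2 C2 h2]; case: (tot R1 R2 C1 C2) => sub.
      exact: (CP R2 C2).2.2 a a' b (sub _ h1) h2.
    exact: (CP R1 C1).2.2 a a' b h1 (sub _ h2).
have [PM1 [PM2 PM3]] := PM.
case: (pselect (forall y, Y y -> exists b, M (y, b))) => [allY|].
  split=> //; apply/pcard_leP/injfunPex.
  have /choice [h hP] : forall y : X, exists b : nat -> nat, Y y -> M (y, b).
    move=> y; case: (pselect (Y y)) => [Yy|nY]; last by exists f0.
    by have [b Mb] := allY y Yy; exists b.
  exists h.
    by move=> y Yy; exact: (PM1 _ (hP y Yy)).2.
  move=> y y' /set_mem Yy /set_mem Yy' e.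
  by apply: (PM3 y y' (h y) (hP y Yy)); rewrite e; exact: hP.
move=> /existsNP [y0 /not_implyP [Yy0 /forallNP nb]].
exfalso.
have allF : forall f, F f -> exists a, M (a, f).
  move=> f Ff; apply: contrapT => na.
  apply: (Mmax (M `|` [set (y0, f)])).
    split; first by move=> p Mp; left.
    by move=> /(_ (y0, f) (or_intror erefl)); apply: nb.
  split; [|split].
  - by move=> p [/PM1 //|->].
  - move=> a b b' H1 H2; case: H1 => [h1|/= e1]; case: H2 => [h2|/= e2].
    + exact: PM2 h1 h2.
    + by case: e2 => ea _; rewrite ea in h1; case: (nb b).
    + by case: e1 => ea _; rewrite ea in h2; case: (nb b').
    + by case: e1 => _ ->; case: e2 => _ ->.
  - move=> a a' b H1 H2; case: H1 => [h1|/= e1]; case: H2 => [h2|/= e2].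
    + exact: PM3 h1 h2.
    + by case: e2 => _ eb; rewrite eb in h1; case: na; exists a.
    + by case: e1 => _ eb; rewrite eb in h2; case: na; exists a'.
    + by case: e1 => -> _; case: e2 => -> _.
have /choice [phi phiP] : forall f : nat -> nat, exists a : X, F f -> M (a, f).
  move=> f; case: (pselect (F f)) => [Ff|nF]; last by exists y0.
  by have [a Ma] := allF f Ff; exists a.
apply: (noinj phi).
  by move=> f Ff; exact: (PM1 _ (phiP f Ff)).1.
by move=> f f' Ff Ff' e; apply: (PM2 (phi f)); [exact: phiP|rewrite e; exact: phiP].
Qed.
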